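(* Let $\Omega$ be a finite set, $(H_i\mid i\in\Omega)$ finite abelian groups with $|H_i|=|H_l|\geqslant 3$ for all $i,l\in\Omega$, $\mathbf{H}=\prod_{i\in\Omega}H_i$, and $\mathbf{P}=(\Omega,\preccurlyeq_{\mathbf{P}})$ a poset. Let $\Lambda$ be the dual partition of $\mathcal{Q}(\mathbf{H},\mathbf{P})$. Then $\Lambda$ is finer than $\mathcal{Q}(\hat{\mathbf{H}},\overline{\mathbf{P}})$, i.e., every block of $\Lambda$ is contained in some block of $\mathcal{Q}(\hat{\mathbf{H}},\overline{\mathbf{P}})$.
   Context: $\hat{\mathbf{H}}$ is the character group of $\mathbf{H}$, identified with $\prod_{i}\hat{H_i}$ via $\alpha(\beta)=\prod_i\alpha_{(i)}(\beta_{(i)})$. For a codeword $\beta$ (in $\mathbf{H}$ or $\hat{\mathbf{H}}$), $\mathrm{supp}(\beta)$ is the set of coordinates $i$ where $\beta_{(i)}$ is not the identity. For $B\subseteq\Omega$, $\langle B\rangle_{\mathbf{P}}=\{a:\exists b\in B, a\preccurlyeq_{\mathbf{P}}b\}$, and $\mathrm{wt}_{\mathbf{P}}(\beta)=|\langle\mathrm{supp}(\beta)\rangle_{\mathbf{P}}|$. $\mathcal{Q}(\mathbf{H},\mathbf{P})$ is the partition of $\mathbf{H}$ into classes of equal $\mathbf{P}$-weight; $\mathcal{Q}(\hat{\mathbf{H}},\overline{\mathbf{P}})$ is the partition of $\hat{\mathbf{H}}$ into classes of equal $\overline{\mathbf{P}}$-weight, where $\overline{\mathbf{P}}$ is the dual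 poset ($u\preccurlyeq_{\overline{\mathbf{P}}}v\iff v\preccurlyeq_{\mathbf{P}}u$). The dual partition of a partition $\Gamma$ of $\mathbf{H}$ is the partition of $\hat{\mathbf{H}}$ in which $\chi,\psi$ lie in the same block iff $\sum_{b\in B}\chi(b)=\sum_{b\in B}\psi(b)$ for every block $B\in\Gamma$. *)

(* Defs.v *)
From HB Require Import structures.
From mathcomp Require Import all_boot all_order all_algebra all_field.
Set Implicit Arguments. Unset Strict Implicit. Unset Printing Implicit Defensive.
Import GRing.Theory.
Local Open Scope ring_scope.

Section PosetWeights.
Variables (Omega : finType) (H : Omega -> finZmodType).

(* the group H = prod_i H_i, written as dependent finite functions *)
Definition codeword := {dffun forall i : Omega, H i}.

Definition is_character (G : finZmodType) (f : G -> algC) : Prop :=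
  f 0 = 1 /\ forall a b : G, f (a + b) = f a * f b.

(* elements of hat H, identified with tuples of characters of the H_i *)
Definition chartuple := forall i : Omega, H i -> algC.

Definition is_chartuple (alpha : chartuple) : Prop :=
  forall i, is_character (alpha i).

Definition char_eval (alpha : chartuple) (beta : codeword) : algC :=
  \prod_(i : Omega) alpha i (beta i).

Definition supp (beta : codeword) : {set Omega} := [set i | beta i != 0].

Definition char_supp (alpha : chartuple) : {set Omega} :=
  [set i | [exists x : H i, alpha i x != 1]].

End PosetWeights.

Definition ideal (Omega : finType) (le : rel Omega) (B : {set Omega}) : {set Omega} :=
  [set a | [exists b in B, le a b]].

Definition dual_rel (Omega : finType) (le : rel Omega) : rel Omega :=
  fun u v => le v u.

Definition is_poset (Omega : finType) (le : rel Omega) : Prop :=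
  reflexive le /\ antisymmetric le /\ transitive le.

Definition wtP (Omega : finType) (H : Omega -> finZmodType) (le : rel Omega)
  (beta : codeword H) : nat := #|ideal le (supp beta)|.

Definition wtPbar_char (Omega : finType) (H : Omega -> finZmodType) (le : rel Omega)
  (alpha : chartuple H) : nat := #|ideal (dual_rel le) (char_supp alpha)|.

(* Main.v *)
Require Import Defs.
From HB Require Import structures.
From mathcomp Require Import all_boot all_order all_algebra all_field.
Local Open Scope ring_scope.
Import GRing.Theory Num.Theory.
Module PA.
Unset Strict Implicit. Unset Printing Implicit Defensive.
Local Open Scope ring_scope.

Section Shift.
Variables (Omega : finType) (H : Omega -> finZmodType).

Definition shift (j : Omega) (x : H j) (b : codeword H) : codeword H :=
  finfun (dfwith (fun i => b i) (b j + x)).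
Arguments shift j x b : clear implicits.

Lemma shift_in j x b : shift j x b j = b j + x.
Proof. by rewrite /shift ffunE dfwith_in. Qed.

Lemma shift_out j x b i : j != i -> shift j x b i = b i.
Proof. by move=> ji; rewrite /shift ffunE dfwith_out. Qed.

Lemma shift_inj j x : injective (shift j x).
Proof.
move=> b c E; apply/ffunP => i; case: (eqVneq j i) => [<-|ji].
  by have := congr1 (fun f : codeword H => f j) E; rewrite !shift_in => /addIr.
by have := congr1 (fun f : codeword H => f i) E; rewrite !shift_out.
Qed.

Variable chi : chartuple H.
Hypothesis chiP : is_chartuple chi.

Lemma eval_shift j x b : char_eval chi (shift j x b) = chi j x * char_eval chi b.
Proof.
rewrite /char_eval (bigD1 j) //= [in RHS](bigD1 j) //= shift_in.
have [_ ->] := chiP j; rewrite mulrA [chi j x * _]mulrC; congr (_ * _).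
by apply: eq_bigr => i ji; rewrite shift_out // eq_sym.
Qed.

Lemma sum_shift0 (P : pred (codeword H)) j x :
  chi j x != 1 -> (forall b, P (shift j x b) = P b) ->
  \sum_(b | P b) char_eval chi b = 0.
Proof.
move=> cx PE.
have E : \sum_(b | P b) char_eval chi b = chi j x * \sum_(b | P b) char_eval chi b.
  rewrite {1}(reindex_inj (@shift_inj j x)) /= mulr_sumr.
  apply: eq_big => [b|b _]; first exact: PE.
  exact: eval_shift.
apply/eqP; move: E => /eqP; rewrite -subr_eq0 -{1}(mul1r (\sum_(b | P b) _)) -mulrBl.
by rewrite mulf_eq0 subr_eq0 eq_sym (negbTE cx).
Qed.
End Shift.

End PA.
Import PA.

Module PB.
Unset Strict Implicit. Unset Printing Implicit Defensive.
Local Open Scope ring_scope.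

Section Fam.
Variables (Omega : finType) (H : Omega -> finZmodType).
Variable chi : chartuple H.
Hypothesis chiP : is_chartuple chi.

Definition fam (N Z : {set Omega}) : pred (codeword H) :=
  fun b => [forall i, ((i \in N) ==> (b i != 0)) && ((i \in Z) ==> (b i == 0))].

Lemma famP (N Z : {set Omega}) (b : codeword H) : reflect (forall i, ((i \in N) ==> (b i != 0)) && ((i \in Z) ==> (b i == 0))) (fam N Z b).
Proof. exact: forallP. Qed.

Lemma fam_split j (N Z : {set Omega}) : j \notin N -> j \notin Z ->
  \sum_(b | fam N Z b) char_eval chi b =
  \sum_(b | fam (j |: N) Z b) char_eval chi b + \sum_(b | fam N (j |: Z) b) char_eval chi b.
Proof.
move=> jN jZ; rewrite (bigID (fun b : codeword H => b j != 0)) /=.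
congr (_ + _); apply: eq_bigl => b; apply/andP/famP.
- case=> /famP F bj i; rewrite !inE; case: (eqVneq i j) => [->|_] /=; last exact: F.
  by rewrite bj (negbTE jZ).
- move=> F; have /andP[Fj _] := F j; rewrite !inE eqxx /= in Fj; split => //.
  by apply/famP => i; have := F i; rewrite !inE; case: (eqVneq i j) => [->|_] /=;
    rewrite ?(negbTE jN) ?(negbTE jZ) //= => /andP[].
- case=> /famP F /negPn bj i; rewrite !inE; case: (eqVneq i j) => [->|_] /=; last exact: F.
  by rewrite bj (negbTE jN).
- move=> F; have /andP[_ Fj] := F j; rewrite !inE eqxx /= in Fj; split; last by rewrite Fj.
  by apply/famP => i; have := F i; rewrite !inE; case: (eqVneq i j) => [->|_] /=;
    rewrite ?(negbTE jN) ?(negbTE jZ) ?orbT //= => /andP[].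
Qed.

Lemma fam_free0 j (N Z : {set Omega}) : j \notin N -> j \notin Z -> j \in char_supp chi ->
  \sum_(b | fam N Z b) char_eval chi b = 0.
Proof.
move=> jN jZ; rewrite inE => /existsP[x cx].
apply: (@sum_shift0 _ _ chi chiP _ j x cx) => b.
apply/famP/famP => F i; have := F i; case: (eqVneq j i) => [<-|ji].
- by rewrite (negbTE jN) (negbTE jZ).
- by rewrite shift_out.
- by rewrite (negbTE jN) (negbTE jZ).
- by rewrite shift_out.
Qed.

Lemma fam_sign n (N Z : {set Omega}) : #|N :&: char_supp chi| = n -> [disjoint N & Z] ->
  (forall i, i \notin Z -> i \notin N -> i \notin char_supp chi) ->
  \sum_(b | fam N Z b) char_eval chi b =
  (-1) ^+ n * (#|fam (N :\: char_supp chi) (Z :|: (N :&: char_supp chi))|)%:R.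
Proof.
elim: n N Z => [|n IH] N Z.
  move=> /eqP; rewrite cards_eq0 => /eqP NT dNZ HT; rewrite expr0 mul1r NT setU0.
  have -> : N :\: char_supp chi = N.
    apply/setP => i; rewrite in_setD; apply: andb_idl => iN; apply/negP => iT.
    have : i \in N :&: char_supp chi by rewrite in_setI iN iT.
    by rewrite NT inE.
  rewrite -sumr_const; apply: eq_big => // b /famP F.
  rewrite /char_eval big1 // => i _; have /andP[FN FZ] := F i.
  case iZ: (i \in Z).
    by move: FZ; rewrite iZ /= => /eqP ->; case: (chiP i).
  have iT : i \notin char_supp chi.
    case iN: (i \in N); last by apply: HT; rewrite ?iZ ?iN.
    apply/negP => iT; have : i \in N :&: char_supp chi by rewrite in_setI iN iT.
    by rewrite NT inE.
  by move: iT; rewrite inE negb_exists => /forallP /(_ (b i)); rewrite negbK => /eqP.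
move=> cN dNZ HT.
have [j jNT] : exists j, j \in N :&: char_supp chi.
  by apply/set0Pn; rewrite -card_gt0 cN.
have /setIP[jN jT] := jNT.
have jZ : j \notin Z by rewrite (disjointFr dNZ jN).
have jN' : j \notin N :\ j by rewrite setD11.
have := @fam_split j _ _ jN' jZ; rewrite (@fam_free0 j _ _ jN' jZ jT) setD1K //.
move/esym/eqP; rewrite addr_eq0 => /eqP ->.
rewrite (IH (N :\ j) (j |: Z)).
- rewrite exprS mulN1r mulNr; congr (- (_ * _%:R)); apply: eq_card => b.
  have jT' := jT; rewrite inE in jT'.
  by congr fam; apply/setP => i; rewrite !inE; case: (eqVneq i j) => [->|] //=;
    rewrite ?jN ?jT' ?orbT.
- by rewrite setIDAC; move: cN; rewrite (cardsD1 j) jNT add1n => -[].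
- rewrite disjoints_subset; apply/subsetP => i; rewrite !inE => /andP[ij iN].
  by rewrite negb_or ij /= (disjointFr dNZ iN).
- move=> i; rewrite !in_setU1 !in_setD1 negb_or => /andP[ij iZ]; rewrite ij /= => iN.
  exact: HT.
Qed.
End Fam.

End PB.
Import PB.

Module PC.
Unset Strict Implicit. Unset Printing Implicit Defensive.
Local Close Scope ring_scope.

Lemma card_fam (Omega : finType) (H : Omega -> finZmodType) (N Z : {set Omega}) :
  [disjoint N & Z] ->
  #|fam _ H N Z| = \prod_i (if i \in N then #|H i|.-1 else if i \in Z then 1 else #|H i|)%N.
Proof.
move=> dNZ.
pose F := fun i : Omega => [pred x : H i | ((i \in N) ==> (x != 0%R)) && ((i \in Z) ==> (x == 0%R))].
have -> : #|fam _ H N Z| = #|(family F : simpl_pred (codeword H))|.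
  by apply: eq_card => b; apply/famP/familyP.
rewrite card_family foldrE big_map big_enum /=; apply: eq_bigr => i _.
case iN: (i \in N).
  rewrite (disjointFr dNZ iN) -(cardC1 (0%R : H i)); apply: eq_card => x; rewrite !inE /=.
  by rewrite unfold_in andbT.
case iZ: (i \in Z) => /=.
  by rewrite -(card1 (0%R : H i)); apply: eq_card => x; rewrite !inE.
by apply: eq_card => x; rewrite !inE.
Qed.

End PC.
Import PC.

Module PE.
Unset Strict Implicit. Unset Printing Implicit Defensive.
Local Close Scope ring_scope.

Section Poset.
Variables (Omega : finType) (le : rel Omega).
Hypothesis le_refl : reflexive le.
Hypothesis le_anti : antisymmetric le.
Hypothesis le_trans : transitive le.
Lemma leT {x y z} : le x y -> le y z -> le x z. Proof. exact: le_trans. Qed.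

Definition maxs (I : {set Omega}) : {set Omega} :=
  [set i in I | [forall k in I, le i k ==> (k == i)]].

Lemma maxsP (I : {set Omega}) i :
  reflect (i \in I /\ forall k, k \in I -> le i k -> k = i) (i \in maxs I).
Proof.
rewrite inE; apply: (iffP andP) => [[iI /forallP F]|[iI F]]; split => //.
  by move=> k kI lik; have := F k; rewrite kI lik /= => /eqP.
by apply/forallP => k; apply/implyP => kI; apply/implyP => lik; rewrite (F k kI lik).
Qed.

Lemma max_above (S : {set Omega}) a : a \in S -> exists2 m, m \in maxs S & le a m.
Proof.
move=> aS.
have Pa : (a \in S) && le a a by rewrite aS le_refl.
case: (@arg_maxnP Omega a (fun m => (m \in S) && le a m) (fun m => #|[set x | le x m]|) Pa) => m /andP[mS lam] Hm.
exists m => //; apply/maxsP; split => // k kS lmk; apply/eqP; apply/negPn/negP => km.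
have Pk : (k \in S) && le a k by rewrite kS (leT lam lmk).
have := Hm k Pk; apply/negP; rewrite -ltnNge; apply: proper_card.
rewrite properE; apply/andP; split.
  by apply/subsetP => x; rewrite !inE => lxm; exact: leT lxm lmk.
apply/subsetPn; exists k; rewrite !inE ?le_refl //.
apply/negP => lkm; move/negP: km; apply; apply/eqP; apply: le_anti; by rewrite lkm lmk.
Qed.

Definition downc (I : {set Omega}) := forall a c, c \in I -> le a c -> a \in I.

Lemma ideal_downc (B : {set Omega}) : downc (ideal le B).
Proof.
move=> a c; rewrite !inE => /existsP[b /andP[bB lcb]] lac.
by apply/existsP; exists b; rewrite bB (leT lac lcb).
Qed.

Lemma sub_ideal (B : {set Omega}) : B \subset ideal le B.
Proof. by apply/subsetP => b bB; rewrite inE; apply/existsP; exists b; rewrite bB le_refl. Qed.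

Variable H : Omega -> finZmodType.

Lemma ideal_famE (I : {set Omega}) (b : codeword H) : downc I ->
  (ideal le (supp b) == I) = fam _ H (maxs I) (~: I) b.
Proof.
move=> dI; apply/eqP/famP => [E i | F].
  apply/andP; split; apply/implyP.
    case/maxsP => iI Mi; move: iI; rewrite -E inE => /existsP[s /andP[]].
    rewrite inE => bs lis; have sI : s \in I by rewrite -E (subsetP (sub_ideal _)) // inE.
    by rewrite -(Mi s sI lis).
  rewrite inE -E; apply: contraR => bi; rewrite (subsetP (sub_ideal _)) // inE.
  done.
apply/setP => a; apply/idP/idP.
  rewrite inE => /existsP[s /andP[]]; rewrite inE => bs las.
  have sI : s \in I.
    apply: contraR bs => sI; have /andP[_ /implyP] := F s; rewrite inE sI; apply.
    done.
  exact: dI sI las.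
move=> aI; have [m mM lam] := max_above _ _ aI.
rewrite inE; apply/existsP; exists m; rewrite lam andbT inE.
by have /andP[/implyP ->] := F m.
Qed.

End Poset.

End PE.
Import PE.

Module PF.
Unset Strict Implicit. Unset Printing Implicit Defensive.
Local Open Scope ring_scope.

Section SetFacts.
Variables (Omega : finType) (A M B : {set Omega}) (i : Omega).
Hypotheses (hM : i \in M -> i \in A) (hT : i \in A -> i \in B -> i \in M).
Lemma sfa : (~~ (i \in M :\: B) && ~~ (i \in ~: A :|: M :&: B)) = (i \in A :\: M).
Proof. by move: hM hT; rewrite !inE; case: (i \in M); case: (i \in B); case: (i \in A) => //= X Y; first [by [] | by have := X isT | by have := Y isT isT]. Qed.
Lemma sfb : (i \in (A :\: B) :&: M) = (i \in M :\: B).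
Proof. by move: hM hT; rewrite !inE; case: (i \in M); case: (i \in B); case: (i \in A) => //= X Y; first [by [] | by have := X isT | by have := Y isT isT]. Qed.
Lemma sfc : (i \in (A :\: B) :\: M) = (i \in A :\: M).
Proof. by move: hM hT; rewrite !inE; case: (i \in M); case: (i \in B); case: (i \in A) => //= X Y; first [by [] | by have := X isT | by have := Y isT isT]. Qed.
End SetFacts.

Section Main.
Variables (Omega : finType) (le : rel Omega).
Hypothesis le_refl : reflexive le.
Hypothesis le_anti : antisymmetric le.
Hypothesis le_trans : transitive le.
Lemma leT' {x y z} : le x y -> le y z -> le x z. Proof. exact: le_trans. Qed.
Variable H : Omega -> finZmodType.
Variable chi : chartuple H.
Hypothesis chiP : is_chartuple chi.

Local Notation T := (char_supp chi).
Definition U := ideal (dual_rel le) T.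
Definition D := ~: U.
Definition minU := [set u in U | [forall v in U, le v u ==> (v == u)]].
Definition I0 := D :|: minU.
Local Notation maxs := (@maxs Omega le).
Local Notation downc := (@downc Omega le).

Lemma UP a : reflect (exists2 t, t \in T & le t a) (a \in U).
Proof.
rewrite /U inE; apply: (iffP existsP) => [[t /andP[tT lta]]|[t tT lta]]; exists t => //.
by rewrite tT.
Qed.

Lemma T_sub_U {t} : t \in T -> t \in U.
Proof. by move=> tT; apply/UP; exists t; rewrite ?le_refl. Qed.

Lemma U_up {u v} : u \in U -> le u v -> v \in U.
Proof. by move=> /UP[t tT ltu] luv; apply/UP; exists t; rewrite ?(leT' ltu luv). Qed.

Lemma minUP u : reflect (u \in U /\ forall v, v \in U -> le v u -> v = u) (u \in minU).
Proof.
rewrite [u \in minU]in_set; apply: (iffP andP) => [[uU /forallP F]|[uU F]]; split => //.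
  by move=> v vU lvu; have := F v; rewrite vU lvu /= => /eqP.
by apply/forallP => v; apply/implyP => vU; apply/implyP => lvu; rewrite (F v vU lvu).
Qed.

Lemma minU_T {u} : u \in minU -> u \in T.
Proof.
by case/minUP => /UP[t tT ltu] M; rewrite -(M t (T_sub_U tT) ltu).
Qed.

Lemma minU_max {u} : u \in minU -> u \in maxs I0.
Proof.
move=> uM; have [uU Mu] := minUP _ uM.
apply/maxsP; split; first by rewrite /I0 in_setU uM orbT.
move=> k; rewrite /I0 /D in_setU in_setC => /orP[]; last first.
  by case/minUP => kU Mk luk; rewrite (Mk u uU luk).
by move=> kU luk; move/negP: kU; case; apply: U_up uU luk.
Qed.

Lemma I0_downc : downc I0.
Proof.
move=> a c; rewrite /I0 /D !in_setU !in_setC => /orP[cD|cM] lac.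
  by apply/orP; left; apply: contra cD => aU; apply: U_up aU lac.
case aU: (a \in U); last by [].
apply/orP; right; have [cU Mc] := minUP _ cM; rewrite (Mc a aU lac) //.
Qed.

Lemma I0T {i} : i \in I0 -> i \in T -> i \in minU.
Proof.
rewrite /I0 /D in_setU in_setC => /orP[/negP iU|//] /T_sub_U.
by move=> iU'; case: iU.
Qed.

Lemma contrib_sub (I : {set Omega}) : downc I ->
  (forall j, j \in I -> j \in T -> j \in maxs I) -> I \subset I0.
Proof.
move=> dI MI.
have claim : forall v, v \in I -> v \in U -> v \in T /\ v \in maxs I.
  move=> v vI /UP[t tT ltv]; have tI := dI _ _ vI ltv.
  have /maxsP[_ Mt] := MI t tI tT; have vt := Mt v vI ltv.
  by rewrite vt; split => //; apply: MI.
apply/subsetP => i iI; rewrite /I0 /D in_setU in_setC; case iU: (i \in U) => //=.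
apply/minUP; split => // v vU lvi.
have vI := dI _ _ iI lvi; have [_ /maxsP[_ Mv]] := claim v vI vU.
by rewrite (Mv i iI lvi).
Qed.


Lemma ideal_agree (c c' : codeword H) j s : (forall i, i != j -> c i = c' i) ->
  s \in supp c -> s != j -> le j s -> ideal le (supp c) \subset ideal le (supp c').
Proof.
move=> E sS sj ljs; apply/subsetP => a; rewrite !inE => /existsP[t /andP[tS lat]].
apply/existsP; case: (eqVneq t j) => [tj|tj].
  exists s; move: sS; rewrite !inE -E // => ->; move: lat; rewrite tj => laj.
  exact: leT' laj ljs.
by exists t; move: tS; rewrite !inE -E // => ->.
Qed.

Lemma shift_ideal (I : {set Omega}) (c c' : codeword H) j k :
  (forall i, i != j -> c i = c' i) -> k \in I -> le j k -> k != j ->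
  ideal le (supp c) = I -> ideal le (supp c') = I.
Proof.
move=> E kI ljk kj Ic; move: (kI); rewrite -Ic inE => /existsP[s /andP[sS lks]].
have sj : s != j.
  apply/eqP => sj; move: lks; rewrite sj => lkj; move/eqP: kj; apply.
  by apply: le_anti; rewrite lkj ljk.
have ljs := leT' ljk lks.
have sS' : s \in supp c' by move: sS; rewrite !inE E.
apply/eqP; rewrite eqEsubset; apply/andP; split.
  by apply: (ideal_agree c' c j s _ sS' sj ljs) => i ij; rewrite E.
exact: (ideal_agree c c' j s E sS sj ljs).
Qed.

Definition cls (I : {set Omega}) := \sum_(b : codeword H | ideal le (supp b) == I) char_eval chi b.

Lemma cls_zero (I : {set Omega}) : (#|I0| <= #|I|)%N -> I != I0 -> cls I = 0.
Proof.
move=> cI II0; rewrite /cls.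
case: (pickP (fun b : codeword H => ideal le (supp b) == I)) => [b0 /eqP E|none]; last first.
  by rewrite big_pred0.
have dI : downc I by rewrite -E; apply: ideal_downc.
case: (boolP [exists j in I, (j \in T) && (j \notin maxs I)]).
  case/existsP => j /andP[jI /andP[jT jM]].
  move: jM; rewrite inE jI /= negb_forall => /existsP[k]; rewrite negb_imply => /andP[kI].
  rewrite negb_imply => /andP[ljk kj].
  move: jT; rewrite inE => /existsP[x cx].
  apply: (@sum_shift0 _ _ chi chiP _ j x cx) => b.
  apply/eqP/eqP => Eb.
    by apply: (shift_ideal I _ _ j k _ kI ljk kj Eb) => i ij; rewrite shift_out // eq_sym.
  by apply: (shift_ideal I _ _ j k _ kI ljk kj Eb) => i ij; rewrite shift_out // eq_sym.
rewrite negb_exists => /forallP NM.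
have sub : I \subset I0.
  apply: contrib_sub => // j jI jT; have := NM j; rewrite jI jT /=.
  by move/negPn.
by move: II0; rewrite eqEcard sub cI.
Qed.


Definition W k := \sum_(b : codeword H | wtP le b == k) char_eval chi b.

Lemma W_part k : W k = \sum_(I : {set Omega} | #|I| == k) cls I.
Proof.
rewrite /W (partition_big (fun b : codeword H => ideal le (supp b)) (fun I : {set Omega} => #|I| == k)) => [|b //].
apply: eq_bigr => I /eqP cI; apply: eq_bigl => b.
by case E: (ideal le (supp b) == I); rewrite ?andbF ?andbT // /wtP (eqP E) cI eqxx.
Qed.

Lemma W_gt k : (#|I0| < k)%N -> W k = 0.
Proof.
move=> lt; rewrite W_part big1 // => I /eqP cI; apply: cls_zero; first by rewrite cI ltnW.
by apply/eqP => II0; move: lt; rewrite -cI II0 ltnn.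
Qed.

Lemma W_I0 : W #|I0| = cls I0.
Proof.
rewrite W_part (bigD1 I0) //= big1 ?addr0 // => I /andP[/eqP cI II0].
by apply: cls_zero => //; rewrite cI.
Qed.

Lemma cls_I0 : cls I0 = (-1) ^+ #|maxs I0 :&: T| *
  (#|fam _ H (maxs I0 :\: T) (~: I0 :|: (maxs I0 :&: T))|)%:R.
Proof.
rewrite /cls (eq_bigl _ _ (fun b => @ideal_famE Omega le le_refl le_anti le_trans H I0 b I0_downc)).
apply: (@fam_sign _ _ chi chiP _ _ _ erefl).
  by rewrite disjoints_subset setCK; apply/subsetP => i /maxsP[].
move=> i; rewrite in_setC negbK => iI iM; apply/negP => iT.
by have := minU_max (I0T iI iT); rewrite (negbTE iM).
Qed.


Lemma M_I0 {i} : i \in maxs I0 -> i \in I0.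
Proof. by case/maxsP. Qed.

Lemma I0T_M {i} : i \in I0 -> i \in T -> i \in maxs I0.
Proof. by move=> iI iT; apply: minU_max; apply: I0T. Qed.

Variable q : nat.
Hypothesis Hq : forall i, #|H i| = q.

Lemma card_c : #|fam _ H (maxs I0 :\: T) (~: I0 :|: (maxs I0 :&: T))| =
  (q.-1 ^ #|maxs I0 :\: T| * q ^ #|I0 :\: maxs I0|)%N.
Proof.
rewrite card_fam; last first.
  rewrite disjoints_subset; apply/subsetP => i; rewrite in_setD in_setC in_setU in_setC in_setI.
  move=> /andP[iT iM]; rewrite (M_I0 iM) /= negb_and iT orbT //.
rewrite (bigID (fun i => i \in maxs I0 :\: T)) /=.
rewrite (eq_bigr (fun _ => q.-1)); last by move=> i ->; rewrite Hq.
rewrite prod_nat_const; congr (_ * _)%N.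
rewrite (bigID (fun i => i \in ~: I0 :|: (maxs I0 :&: T))) /= big1 ?mul1n; last first.
  by move=> i /andP[/negbTE -> ->].
transitivity (\prod_(i in I0 :\: maxs I0) q)%N; last by rewrite prod_nat_const.
apply: eq_big => [i|i /andP[/negbTE -> /negbTE ->]]; last exact: Hq.
by apply: sfa; [exact: @M_I0 | exact: @I0T_M].
Qed.

Lemma card_U : (#|U| + (#|I0 :\: maxs I0| + #|maxs I0 :\: T|) = #|Omega|)%N.
Proof.
have DE : D = I0 :\: T.
  apply/setP => i; rewrite in_setD /I0 /D in_setU !in_setC.
  case iU: (i \in U) => /=; last first.
    by case iT: (i \in T) => //; move: iU; rewrite (T_sub_U iT).
  case iM: (i \in minU); last by rewrite andbF.
  by rewrite (minU_T iM).
rewrite -(cardsC U) -/D DE -(cardsID (maxs I0) (I0 :\: T)); congr (_ + _)%N.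
rewrite addnC; congr (_ + _)%N; apply: eq_card => i; apply/esym.
  by apply: sfb; [exact: @M_I0 | exact: @I0T_M].
by apply: sfc; [exact: @M_I0 | exact: @I0T_M].
Qed.

End Main.

End PF.
Import PF.

Module PG.
Unset Strict Implicit. Unset Printing Implicit Defensive.
Local Close Scope ring_scope.

Lemma pow_uniq q x y x' y' : (2 < q)%N ->
  (q.-1 ^ y * q ^ x = q.-1 ^ y' * q ^ x')%N -> x = x' /\ y = y'.
Proof.
move=> q2.
have key : forall x y x' y', (x <= x')%N -> (q.-1 ^ y * q ^ x = q.-1 ^ y' * q ^ x')%N -> x = x' /\ y = y'.
  move=> {}x {}y {}x' {}y' le E.
  have q0 : (0 < q ^ x)%N by rewrite expn_gt0 (ltn_trans _ q2).
  move: E; rewrite -(subnKC le) expnD mulnA mulnAC => /eqP; rewrite eqn_pmul2r // => /eqP E.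
  have d0 : x' - x = 0%N.
    case: (posnP (x' - x)) => // d0.
    have dv : q %| q.-1 ^ y by rewrite E dvdn_mull // dvdn_exp.
    have cp : coprime q (q.-1 ^ y) by apply: coprimeXr; clear -q2; case: q q2 => // n _; exact: coprimeSn.
    by move: cp; rewrite /coprime (gcdn_idPl dv) => /eqP q1; rewrite q1 in q2.
  move: E; rewrite d0 expn0 muln1 => /eqP; rewrite eqn_exp2l; last by clear -q2; case: q q2 => // [[|[|n]]].
  by move=> /eqP ->; split => //; rewrite addn0.
case: (leqP x x') => h E; first exact: key.
by have [-> ->] := key x' y' x y (ltnW h) (esym E).
Qed.

Local Open Scope ring_scope.
Lemma sign_nat_eq (a b m n : nat) :
  (-1) ^+ a * m%:R = (-1) ^+ b * n%:R :> algC -> m = n.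
Proof.
move=> /(congr1 Num.norm); rewrite !normrM !normrX normrN1 !expr1n !mul1r.
by rewrite !normr_nat => /eqP; rewrite eqr_nat => /eqP.
Qed.

End PG.
Import PG.


Theorem theorem2p2 (Omega : finType) (H : Omega -> finZmodType) (le : rel Omega)
  (Hposet : is_poset le)
  (Hcard : forall i l : Omega, #|H i| = #|H l|)
  (Hge3 : forall i : Omega, (3 <= #|H i|)%N)
  (chi psi : chartuple H) :
  is_chartuple chi -> is_chartuple psi ->
  (forall k : nat,
     \sum_(b : codeword H | wtP le b == k) char_eval chi b =
     \sum_(b : codeword H | wtP le b == k) char_eval psi b) ->
  wtPbar_char le chi = wtPbar_char le psi.
Proof.
move=> chiP psiP HW.
have [lr [la lt]] := Hposet.
case: (pickP (fun _ : Omega => true)) => [i0 _|none]; last first.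
  by rewrite /wtPbar_char !eq_card0 // => z; have := none z.
pose q := #|H i0|.
have Hq : forall i, #|H i| = q by move=> i; rewrite /q (Hcard i i0).
have q2 : (2 < q)%N by apply: Hge3.
pose I0' c := I0 _ le H c.
pose a (c : chartuple H) := #|maxs _ le (I0' c) :&: char_supp c|.
pose x (c : chartuple H) := #|I0' c :\: maxs _ le (I0' c)|.
pose y (c : chartuple H) := #|maxs _ le (I0' c) :\: char_supp c|.
have val : forall c, is_chartuple c ->
    W _ le H c #|I0' c| = (-1) ^+ a c * ((q.-1 ^ y c * q ^ x c)%N)%:R.
  move=> c cP.
  by rewrite (W_I0 _ _ la lt _ _ cP) (cls_I0 _ _ lr la lt _ _ cP) (card_c _ _ lr lt _ c q Hq).
have nz : forall c, is_chartuple c -> W _ le H c #|I0' c| != 0.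
  move=> c cP; rewrite val // mulf_neq0 // ?expf_neq0 ?oppr_eq0 ?oner_eq0 //.
  rewrite pnatr_eq0 -lt0n muln_gt0 !expn_gt0.
  by clear -q2; case: q q2 => // [[|[|n]]].
have HW' : forall k, W _ le H chi k = W _ le H psi k by exact: HW.
have eqK : #|I0' chi| = #|I0' psi|.
  case: (ltngtP #|I0' chi| #|I0' psi|) => // h.
    by have := nz psi psiP; rewrite -HW' (W_gt _ _ la lt _ _ chiP _ h) eqxx.
  by have := nz chi chiP; rewrite HW' (W_gt _ _ la lt _ _ psiP _ h) eqxx.
have := val chi chiP; rewrite HW' eqK val // => E.
have /(pow_uniq _ _ _ _ _ q2) [ex ey] := sign_nat_eq _ _ _ _ E.
have A := card_U _ _ lr lt _ chi; have B := card_U _ _ lr lt _ psi.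
have := etrans A (esym B).
rewrite -/(I0' chi) -/(I0' psi) -/(x chi) -/(y chi) -/(x psi) -/(y psi) ex ey.
by move/addIn.
Qed.
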